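(* Let $\varepsilon\in(0,1]$, $n\ge1$, and let $W$ be a random channel drawn from $\mathcal{W}_{Q,\varepsilon}$. With probability at least $3/4$, every bipartite independent set $(A,B)$ of $G_{W,n}$ satisfies $$\frac1n\log_2(|A||B|)\le q+\log_2\frac{3}{\varepsilon}.$$
   Context: Fix an integer $q\ge1$, $Q=2^q$, $[Q]=\{1,\dots,Q\}$, and a symbol $\phi\notin[Q]$. $\mathcal{W}_{Q,\varepsilon}$ is the distribution over functions $W:[Q]^2\to([Q]\cup\{\phi\})^2$ in which, independently for every $(x,y)\in[Q]^2$, $W(x,y)=(\phi,\phi)$ with probability $\varepsilon$ and $W(x,y)=(x,y)$ otherwise. $G_{W,n}$ is the bipartite graph whose two sides are two copies of $[Q]^n$, with $x^{(n)}=(x_1,\dots,x_n)$ (left) adjacent to $y^{(n)}=(y_1,\dots,y_n)$ (right) iff there is an index $i$ with $W(x_i,y_i)=(\phi,\phi)$. In a bipartite graph with sides $X,Y$, a bipartite independent set (BPIS) is a pair $(A,B)$ with $A\subseteq X$, $B\subseteq Y$ and no edge between $A$ and $B$; its size is $|A|\cdot|B|$. *)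

(* Defs.v *)
From mathcomp Require Import all_boot.
From Stdlib Require Import Reals.
Set Implicit Arguments. Unset Strict Implicit. Unset Printing Implicit Defensive.

(* [Q] is modelled by 'I_Q (labels 0..Q-1); phi is None. *)
Definition sym (Q : nat) := option 'I_Q.

Definition channel (Q : nat) := {ffun 'I_Q * 'I_Q -> sym Q * sym Q}.

(* Probability of a channel under W_{Q,eps}: independently for each (x,y),
   W(x,y) = (phi,phi) w.p. eps and W(x,y) = (x,y) otherwise. *)
Definition chan_prob (Q : nat) (eps : R) (W : channel Q) : R :=
  \big[Rmult/1%R]_(xy : 'I_Q * 'I_Q)
    (if W xy == (None, None) then eps
     else if W xy == (Some xy.1, Some xy.2) then (1 - eps)%R else 0%R).

Definition word (Q n : nat) := {ffun 'I_n -> 'I_Q}.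

Definition adj (Q n : nat) (W : channel Q) (x y : word Q n) : Prop :=
  exists i : 'I_n, W (x i, y i) = (None, None).

Definition is_BPIS (Q n : nat) (W : channel Q) (A B : {set word Q n}) : Prop :=
  forall x y, x \in A -> y \in B -> ~ adj W x y.

Definition log2 (x : R) : R := (ln x / ln 2)%R.

(* Main.v *)
Require Import Defs.
From mathcomp Require Import all_boot.
From Stdlib Require Import Reals Lra.
From mathcomp Require Import all_order all_algebra Rstruct zify.
Import GRing.Theory Num.Theory Order.TTheory.

Section Sec_P1.
Local Open Scope ring_scope.

Definition fw {Q} (eps:R) (xy : 'I_Q*'I_Q) (v : sym Q * sym Q) : R :=
  if v == (None,None) then eps else if v == (Some xy.1, Some xy.2) then (1 - eps)%R else 0%R.

Definition efree {Q} (W: channel Q) (Rr : {set 'I_Q*'I_Q}) : bool :=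
  [forall xy in Rr, W xy != (None,None)].



Lemma chan_probE Q eps (W : channel Q) :
  chan_prob eps W = \prod_xy fw eps xy (W xy).
Proof. by []. Qed.

Lemma sum_efree Q eps (Rr : {set 'I_Q*'I_Q}) :
  \sum_(W : channel Q | efree W Rr) chan_prob eps W = (1 - eps) ^+ #|Rr|.
Proof.
pose g (xy : 'I_Q*'I_Q) (v : sym Q * sym Q) :=
  if (xy \in Rr) && (v == (None,None)) then 0 else fw eps xy v.
have E W : (if efree W Rr then chan_prob eps W else 0) = \prod_xy g xy (W xy).
  rewrite chan_probE; case: ifP => [/forallP H|/negbT].
    apply: eq_bigr => xy _; rewrite /g; case: (boolP (xy \in Rr)) => //= xR.
    by move/implyP: (H xy) => /(_ xR) /negbTE ->.
  rewrite negb_forall => /existsP [xy]; rewrite negb_imply negbK => /andP [xR /eqP WE].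
  by rewrite (bigD1 xy) //= /g xR WE eqxx mul0r.
rewrite big_mkcond /=; under eq_bigr do rewrite E.
rewrite -(bigA_distr_bigA g).
have S xy : \sum_v g xy v = if xy \in Rr then 1 - eps else 1.
  rewrite (bigD1 (None,None)) //= (bigD1 (Some xy.1, Some xy.2)) //= big1.
    rewrite /g /fw /= !eqxx /=.
    case: (xy \in Rr) => /=; rewrite ?addr0 ?add0r //.
    by rewrite -[in RHS](subrK eps 1) addrC.
  move=> v /andP [v1 v2]; rewrite /g /fw (negbTE v1) (negbTE v2).
  by case: (xy \in Rr).
under eq_bigr do rewrite S.
by rewrite -big_mkcond prodr_const.
Qed.

End Sec_P1.

Section Sec_P2.
Local Open Scope ring_scope.


Lemma fw_ge0 Q (eps : R) xy v : 0 <= eps <= 1 -> 0 <= @fw Q eps xy v.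
Proof.
case/andP=> e0 e1; rewrite /fw; case: ifP => // _; case: ifP => // _.
by rewrite subr_ge0.
Qed.

Lemma chan_prob_ge0 Q (eps : R) (W : channel Q) : 0 <= eps <= 1 -> 0 <= chan_prob eps W.
Proof. by move=> h; rewrite chan_probE; apply: prodr_ge0 => xy _; apply: fw_ge0. Qed.

Definition Bad Q (K : R) := [set ST : {set 'I_Q} * {set 'I_Q} | K < (#|ST.1| * #|ST.2|)%:R].
Definition Gd Q (K : R) := [set W : channel Q | [forall ST in Bad Q K, ~~ efree W (setX ST.1 ST.2)]].

Lemma compl_bound Q (eps K : R) : 0 <= eps <= 1 ->
  \sum_(W | W \notin Gd Q K) chan_prob eps W <=
  \sum_(ST in Bad Q K) (1 - eps) ^+ (#|ST.1| * #|ST.2|).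
Proof.
move=> he.
under [in X in _ <= X]eq_bigr => ST _ do rewrite -cardsX -sum_efree big_mkcond /=.
rewrite exchange_big /= big_mkcond /=.
apply: ler_sum => W _.
have H0 : 0 <= \sum_(ST in Bad Q K) (if efree W (setX ST.1 ST.2) then chan_prob eps W else 0).
  by apply: sumr_ge0 => ST _; case: ifP => // _; apply: chan_prob_ge0.
case: ifP => [WG|_ //]; move: WG; rewrite inE negb_forall => /existsP [ST].
rewrite negb_imply negbK => /andP [STB Ef].
rewrite (bigD1 ST) //= Ef lerDl.
by apply: sumr_ge0 => ST' _; case: ifP => // _; apply: chan_prob_ge0.
Qed.

End Sec_P2.

Section Sec_P3.
Local Open Scope ring_scope.

Lemma expn_pow m n : expn m n = Nat.pow m n.
Proof. by elim: n => // n IH; rewrite expnS IH. Qed.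

Lemma nat_big Q : leq 2 Q -> leq (muln 4 (muln (expn 2 Q) (expn 2 Q))) (expn 2 (muln 3 Q)).
Proof.
move=> HQ.
have -> : (3 * Q = 2 + Q + Q + (Q - 2))%nat by lia.
rewrite !expnD (_ : expn 2 2 = 4) //.
have := expn_gt0 2 (Q - 2); set b := expn 2 (Q - 2); set a := expn 2 Q.
move=> hb; rewrite -[X in (X <= _)%nat]muln1 -!mulnA.
by rewrite !leq_mul2l hb !orbT.
Qed.

Section S.
Local Open Scope R_scope.
Lemma exp_pow_R a k : exp a ^ k = exp (a * INR k).
Proof.
induction k as [|k IH].
- simpl; rewrite Rmult_0_r exp_0; ring.
- change (exp a ^ S k) with (exp a * exp a ^ k). rewrite IH S_INR -exp_plus; f_equal; ring.
Qed.

Lemma term_bound_R (Q : nat) eps m : 0 < eps <= 1 -> 3 * INR Q < eps * INR m ->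
  (1 - eps) ^ m <= / exp (3 * INR Q).
Proof.
intros He Hm.
assert (h1: (1 - eps) ^ m <= exp (- eps) ^ m).
{ apply pow_incr; pose proof (exp_ineq1_le (- eps)); lra. }
rewrite exp_pow_R in h1. rewrite <- exp_Ropp. apply Rle_trans with (1:=h1).
left; apply exp_increasing; lra.
Qed.

Lemma exp_big (Q : nat) : is_true (leq 2 Q) -> 4 * INR (2 ^ Q * 2 ^ Q) <= exp (3 * INR Q).
Proof.
intros HQ.
assert (e1 : 2 <= exp 1) by (pose proof (exp_ineq1 1); lra).
assert (h : exp (3 * INR Q) = exp 1 ^ (3 * Q)).
{ rewrite exp_pow_R mult_INR; f_equal; simpl; ring. }
rewrite h. apply Rle_trans with (2 ^ (3 * Q)).
2: { apply pow_incr; lra. }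
replace 4 with (INR 4) by (simpl; ring).
rewrite <- mult_INR. rewrite <- (pow_INR 2). rewrite -expn_pow.
apply le_INR. apply/ssrnat.leP. rewrite -!expn_pow. exact: (nat_big Q HQ).
Qed.
End S.

End Sec_P3.

Section Sec_P4.
Local Open Scope ring_scope.

Definition cst (Q : nat) : R := Rinv (exp (Rmult 3 (INR Q))).
Definition Kc (Q : nat) (eps : R) : R := Rmult (INR Q) (Rdiv 3 eps).

Lemma term_bound_ring Q eps m : Rlt 0 eps -> Rle eps 1 ->
  (Kc Q eps < m%:R)%R -> ((1 - eps) ^+ m <= cst Q)%R.
Proof.
move=> e0 e1 /RltP; rewrite -INRE /Kc => h.
apply/RleP; rewrite -RpowE /cst.
apply: term_bound_R; first by split.
have := Rmult_lt_compat_l eps _ _ e0 h.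
have -> : Rmult eps (Rmult (INR Q) (Rdiv 3 eps)) = Rmult 3 (INR Q).
  by field; apply: Rgt_not_eq.
by [].
Qed.

Lemma total_one Q eps : (\sum_(W : channel Q) chan_prob eps W = 1)%R.
Proof.
have := sum_efree Q eps (set0 : {set 'I_Q * 'I_Q}); rewrite cards0 expr0 => <-.
by apply: eq_bigl => W; symmetry; apply/forallP => xy; rewrite inE.
Qed.

Lemma prob_part Q eps : leq 2 Q -> Rlt 0 eps -> Rle eps 1 ->
  Rle (Rdiv 3 4) (\sum_(W in Gd Q (Kc Q eps)) chan_prob eps W)%R.
Proof.
move=> HQ e0 e1.
have he : (0 <= eps <= 1)%R by apply/andP; split; apply/RleP => //; apply: Rlt_le.
have C := compl_bound Q eps (Kc Q eps) he.
have C2 : (\sum_(ST in Bad Q (Kc Q eps)) (1 - eps) ^+ (#|ST.1| * #|ST.2|) <=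
           \sum_(ST : {set 'I_Q} * {set 'I_Q}) cst Q)%R.
  apply: le_trans (_ : \sum_(ST in Bad Q (Kc Q eps)) cst Q <= _)%R.
    apply: ler_sum => ST; rewrite inE => hST.
    by apply: term_bound_ring => //; rewrite natrM.
  rewrite [X in (_ <= X)%R](bigID (fun ST => ST \in Bad Q (Kc Q eps))) /= lerDl.
  apply: sumr_ge0 => ST _; apply/RleP; apply: Rlt_le; apply: Rinv_0_lt_compat.
  exact: exp_pos.
have C3 : (\sum_(ST : {set 'I_Q} * {set 'I_Q}) cst Q <= Rdiv 1 4)%R.
  rewrite sumr_const card_prod -cardsT -powersetT card_powerset cardsT card_ord.
  rewrite -mulr_natl -INRE -RmultE /cst !expn_pow.
  apply/RleP.
  have h := exp_big Q HQ.
  have hp := exp_pos (Rmult 3 (INR Q)).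
  set e := exp (Rmult 3 (INR Q)) in h hp *.
  apply Rle_trans with (Rmult (Rdiv e 4) (Rinv e)).
    apply Rmult_le_compat_r; [left; apply Rinv_0_lt_compat; lra| lra].
  right; field; lra.
have T := total_one Q eps.
rewrite (bigID (fun W => W \in Gd Q (Kc Q eps))) /= in T.
move: T C C2 C3; rewrite -!RplusE.
move=> T /RleP C /RleP C2 /RleP C3.
rewrite -R1E in T.
set a := (\sum_(W in Gd Q (Kc Q eps)) chan_prob eps W)%R in T *.
set b := (\sum_(W | W \notin Gd Q (Kc Q eps)) chan_prob eps W)%R in T C.
set c := (\sum_(ST in Bad Q (Kc Q eps)) _)%R in C C2.
set d := (\sum_ST cst Q)%R in C2 C3.
clearbody a b c d.
have hb : Rle b (Rdiv 1 4) := Rle_trans _ _ _ C (Rle_trans _ _ _ C2 C3).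
move: T hb; rewrite /= => T hb. lra.
Qed.

End Sec_P4.

Section Sec_P5.
Local Open Scope ring_scope.


Lemma card_proj Q n (A : {set word Q n}) :
  leq #|A| (\prod_(i < n) #|[set x i | x : word Q n in A]|)%N.
Proof.
pose F := fun i : 'I_n => [pred a | a \in [set x i | x : word Q n in A]].
have sub : A \subset finfun.family F.
  apply/subsetP => x xA; apply/familyP => i; rewrite /F inE.
  by apply/imsetP; exists x.
apply: leq_trans (subset_leq_card sub) _.
by rewrite card_family foldrE big_map big_enum.
Qed.

Lemma det_part Q (K : R) (W : channel Q) n (A B : {set word Q n}) :
  W \in Gd Q K -> is_BPIS W A B -> 0 <= K -> ((muln #|A| #|B|)%:R <= K ^+ n).
Proof.
move=> WG HB K0.
pose Ai i := [set x i | x : word Q n in A]; pose Bi i := [set y i | y : word Q n in B].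
have H i : ((muln #|Ai i| #|Bi i|)%:R <= K).
  have Ef : efree W (setX (Ai i) (Bi i)).
    apply/forallP => [[a b]]; apply/implyP; rewrite inE /= => /andP [].
    move=> /imsetP [x xA ->] /imsetP [y yB ->].
    apply/eqP => E; apply: (HB x y xA yB); by exists i.
  move: WG; rewrite inE => /forallP /(_ (Ai i, Bi i)) /implyP.
  case: (boolP ((Ai i, Bi i) \in Bad Q K)) => [hb /(_ isT)|]; first by rewrite Ef.
  by rewrite inE /= -leNgt.
apply: le_trans (_ : (\prod_(i < n) (muln #|Ai i| #|Bi i|))%N%:R <= _).
  rewrite ler_nat big_split /=.
  by apply: leq_mul; apply: card_proj.
rewrite natr_prod; have -> : K ^+ n = \prod_(i < n) K by rewrite prodr_const card_ord.
by apply: ler_prod => i _; rewrite ler0n H.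
Qed.

Lemma Kc_ge0 Q eps : Rlt 0 eps -> 0 <= Kc Q eps.
Proof.
move=> e0; apply/RleP; rewrite /Kc; apply: Rmult_le_pos; first exact: pos_INR.
apply: Rlt_le; apply: Rdiv_lt_0_compat => //. by apply: IZR_lt.
Qed.
End Sec_P5.

Section Final.
Local Open Scope R_scope.
Lemma ln0 : ln 0 = 0.
Proof. unfold ln; destruct (Rlt_dec 0 0) as [h|h]; [exfalso; exact (Rlt_irrefl 0 h)|reflexivity]. Qed.

Lemma log_part q eps n P : 0 < eps -> eps <= 1 -> (0 < n)%coq_nat ->
  INR P <= (INR (Nat.pow 2 q) * (3 / eps)) ^ n ->
  / INR n * log2 (INR P) <= INR q + log2 (3 / eps).
Proof.
intros e0 e1 hn HP.
assert (ln2 : 0 < ln 2) by (rewrite <- ln_1; apply ln_increasing; lra).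
assert (h3 : 1 < 3 / eps).
{ apply (Rmult_lt_reg_r eps); [lra|]. unfold Rdiv; rewrite Rmult_assoc Rinv_l; lra. }
assert (L0 : 0 < ln (3 / eps)) by (rewrite <- ln_1; apply ln_increasing; lra).
assert (nR : 0 < INR n) by (apply lt_0_INR; exact hn).
assert (qR := pos_INR q).
unfold log2.
destruct P as [|P].
- simpl INR. rewrite ln0. unfold Rdiv. rewrite Rmult_0_l Rmult_0_r.
  apply Rplus_le_le_0_compat; [lra|]. apply Rmult_le_pos; [lra|]. left; apply Rinv_0_lt_compat; lra.
- assert (P0 : 0 < INR (S P)) by (apply lt_0_INR; lia).
  assert (K0 : 0 < INR (Nat.pow 2 q)) by (apply lt_0_INR; apply Nat.neq_0_lt_0; apply Nat.pow_nonzero; lia).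
  assert (Kp : 0 < INR (Nat.pow 2 q) * (3 / eps)) by (apply Rmult_lt_0_compat; lra).
  assert (lnK : ln (INR (Nat.pow 2 q) * (3 / eps)) = INR q * ln 2 + ln (3 / eps)).
  { rewrite ln_mult; [|lra|lra]. rewrite pow_INR.
    replace (INR 2) with 2 by (simpl; ring). rewrite ln_pow; [reflexivity|lra]. }
  assert (Hl : ln (INR (S P)) <= INR n * (INR q * ln 2 + ln (3 / eps))).
  { rewrite <- lnK, <- ln_pow; [|assumption].
    destruct HP as [HP|HP].
    - left; apply ln_increasing; assumption.
    - right; rewrite HP; reflexivity. }
  apply Rle_trans with (/ INR n * ((INR n * (INR q * ln 2 + ln (3 / eps))) / ln 2)).
  + apply Rmult_le_compat_l; [left; apply Rinv_0_lt_compat; lra|].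
    unfold Rdiv. apply Rmult_le_compat_r; [left; apply Rinv_0_lt_compat; lra|]. exact Hl.
  + right. field. lra.
Qed.
End Final.

Delimit Scope R_scope with R.
Theorem proposition2 (q : nat) (eps : R) (n : nat) :
  (1 <= q)%N -> (0 < eps <= 1)%R -> (1 <= n)%N ->
  exists G : {set channel (2 ^ q)},
    (forall W, W \in G ->
       forall A B : {set word (2 ^ q) n}, is_BPIS W A B ->
         (/ INR n * log2 (INR (#|A| * #|B|)) <= INR q + log2 (3 / eps))%R) /\
    (3 / 4 <= \big[Rplus/0%R]_(W in G) chan_prob eps W)%R.
Proof.
move=> hq [e0 e1] hn.
have HQ : leq 2 (Nat.pow 2 q).
  rewrite -expn_pow; have := leq_pexp2l (isT : 0 < 2)%N hq.
  by rewrite expn1.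
exists (Gd (Nat.pow 2 q) (Kc (Nat.pow 2 q) eps)); split.
- move=> W WG A B HB.
  have K0 := Kc_ge0 (Nat.pow 2 q) eps e0.
  have D := det_part (Nat.pow 2 q) (Kc (Nat.pow 2 q) eps) W n A B WG HB K0.
  move/RleP: D; rewrite -INRE -RpowE => D.
  apply: log_part => //; first by apply/ssrnat.leP.
- exact: (prob_part (Nat.pow 2 q) eps HQ e0 e1).
Qed.
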